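(* Let $P$ be an $n$-element poset, $L$ a labeling of $P$, and $x,y\in P$ with $y<_P x$. Fix $\gamma\in\{1,\ldots,n-2\}$ and suppose $L_\gamma(y)>L_\gamma(x)$. Then $L_\gamma(y)=L_{\gamma-1}(y)-1$ (i.e. $y$ is not in the promotion chain of $L_{\gamma-1}$), and moreover $L_{\gamma-1}(y)>L_{\gamma-1}(x)$.
   Context: A labeling of an $n$-element poset $P$ is a bijection $L:P\to[n]$. For a non-maximal $x\in P$, the $L$-successor of $x$ is the element $y>_P x$ with minimal label. The promotion chain of $L$ is $v_1<_P\cdots<_P v_m$ with $v_1=L^{-1}(1)$, $v_{i+1}$ the $L$-successor of $v_i$, and $v_m$ the first maximal element reached. Promotion: $\partial(L)(x)=L(x)-1$ if $x$ is not in the promotion chain; $\partial(L)(v_i)=L(v_{i+1})-1$ for $i<m$; $\partial(L)(v_m)=n$. Write $L_\gamma=\partial^\gamma(L)$, $L_0=L$. *)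

(* Defs.v *)
From mathcomp Require Import all_boot all_order.
Set Implicit Arguments. Unset Strict Implicit. Unset Printing Implicit Defensive.
Import Order.Theory.
Local Open Scope order_scope.

Section Promotion.
Variables (d : Order.disp_t) (P : finPOrderType d).

(* L is a labeling: a bijection P -> [n] = {1,...,n}, n = #|P|. *)
Definition is_labeling (L : {ffun P -> nat}) : Prop :=
  injective L /\ (forall x, (1 <= L x <= #|P|)%N) .

Definition label_inv (L : {ffun P -> nat}) (k : nat) : option P :=
  [pick x | L x == k].

Definition lsucc (L : {ffun P -> nat}) (x : P) : option P :=
  [pick y | (x < y) && [forall z, (x < z) ==> (L y <= L z)%N]].

(* follow successors from x until a maximal element is reached
   (fuel is sufficient since the chain is strictly increasing) *)
Fixpoint chain_from (L : {ffun P -> nat}) (fuel : nat) (x : P) : seq P :=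
  match fuel with
  | 0 => [:: x]
  | f.+1 => match lsucc L x with
            | Some y => x :: chain_from L f y
            | None => [:: x]
            end
  end.

Definition promotion_chain (L : {ffun P -> nat}) : seq P :=
  match label_inv L 1 with
  | Some v => chain_from L #|P| v
  | None => [::]
  end.

Definition promote (L : {ffun P -> nat}) : {ffun P -> nat} :=
  let c := promotion_chain L in
  [ffun x => if x \in c then
               let i := index x c in
               if (i.+1 < size c)%N then L (nth x c i.+1) - 1 else #|P|
             else L x - 1].

Definition promote_iter (g : nat) (L : {ffun P -> nat}) : {ffun P -> nat} :=
  iter g promote L.

End Promotion.

(* Main.v *)
Require Import Defs.
From mathcomp Require Import all_boot all_order zify.
Import Order.Theory.
Set Implicit Arguments. Unset Strict Implicit.

Section S.
Variables (d : Order.disp_t) (P : finPOrderType d) (M : {ffun P -> nat}).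

Lemma lsuccS p s : lsucc M p = Some s ->
  (p < s)%O /\ forall z, (p < z)%O -> M s <= M z.
Proof.
rewrite /lsucc; case: pickP => // z /andP[pz /forallP H] [<-]; split=> // w pw.
by have := H w; rewrite pw.
Qed.

Lemma lsuccN p z : lsucc M p = None -> ~ (p < z)%O.
Proof.
rewrite /lsucc; case: pickP => // H _ pz.
case: (arg_minnP (fun w => M w) pz) => m pm Hm.
have := H m; rewrite pm /=; move/negP; apply; apply/forallP=> w.
by apply/implyP=> pw; apply: Hm.
Qed.

Lemma cf_head f x x0 : nth x0 (chain_from M f x) 0 = x /\ 0 < size (chain_from M f x).
Proof. by case: f => //= f; case: (lsucc M x). Qed.

Lemma cf_succ f x x0 i : i.+1 < size (chain_from M f x) ->
  lsucc M (nth x0 (chain_from M f x) i) = Some (nth x0 (chain_from M f x) i.+1).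
Proof.
elim: f x i => [|f IH] x i //=.
case E: (lsucc M x) => [y|] //=; case: i => [|i] /= Hi.
  by have [-> _] := cf_head f y x0.
by apply: IH.
Qed.

Lemma cf_end f x x0 : lsucc M (nth x0 (chain_from M f x) (size (chain_from M f x)).-1) = None
  \/ size (chain_from M f x) = f.+1.
Proof.
elim: f x => [|f IH] x /=; first by right.
case E: (lsucc M x) => [y|] /=; last by left.
have [_ Hs] := cf_head f y x0.
case: (IH y) => [H|->]; last by right.
left; move: H; case: (size _) Hs => //= n _.
Qed.

Lemma cf_sorted f x : sorted (<%O) (chain_from M f x).
Proof.
apply/(sortedP x) => i Hi; have := cf_succ x Hi.
by case/lsuccS.
Qed.

Definition c := promotion_chain M.

Lemma c_uniq : uniq c.
Proof. rewrite /c /promotion_chain; case: label_inv => // v.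
exact: lt_sorted_uniq (cf_sorted _ _). Qed.

Lemma c_succ x0 i : i.+1 < size c -> lsucc M (nth x0 c i) = Some (nth x0 c i.+1).
Proof. rewrite /c /promotion_chain; case: label_inv => // v; exact: cf_succ. Qed.

Lemma cf_last v x0 : lsucc M (nth x0 (chain_from M #|P| v) (size (chain_from M #|P| v)).-1) = None.
Proof.
case: (cf_end #|P| v x0) => // Hs.
have U := lt_sorted_uniq (cf_sorted #|P| v).
move/card_uniqP: U; rewrite Hs => H.
by have := max_card (mem (chain_from M #|P| v)); rewrite H ltnn.
Qed.

Lemma c_last x0 : 0 < size c -> lsucc M (nth x0 c (size c).-1) = None.
Proof. rewrite /c /promotion_chain; case: label_inv => // v _; exact: cf_last. Qed.

Lemma c_head x0 : 0 < size c -> M (nth x0 c 0) = 1.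
Proof. rewrite /c /promotion_chain /label_inv; case: pickP => // v /eqP Hv _.
by have [-> _] := cf_head #|P| v x0. Qed.
End S.

Definition nat_of_ffun (A : finType) (f : {ffun A -> nat}) : A -> nat := fun x => f x.
Lemma natE (A : finType) (f : {ffun A -> nat}) x : f x = nat_of_ffun f x. Proof. by []. Qed.
Ltac mlia := intros; repeat match goal with H : context[@fun_of_fin _ _ _ ?f ?x] |- _ => rewrite (natE f x) in H end; repeat match goal with |- context[@fun_of_fin _ _ _ ?f ?x] => rewrite (natE f x) end;
  repeat match goal with H : context[nat_of_ffun _ _] |- _ => revert H end;
  repeat match goal with |- context[nat_of_ffun ?f ?x] => let u := fresh "u" in move: (nat_of_ffun f x) => u end; intros; lia.

Lemma last_idx i n : i < n -> ~~ (i.+1 < n) -> i = n.-1.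
Proof. lia. Qed.

Section T.
Variables (d : Order.disp_t) (P : finPOrderType d) (M : {ffun P -> nat}).
Hypothesis HM : is_labeling M.

Lemma prom_out z : z \notin c M -> promote M z = M z - 1.
Proof. by rewrite /promote ffunE -/(c M) => /negbTE ->. Qed.

Lemma prom_in z : z \in c M -> promote M z =
  if (index z (c M)).+1 < size (c M) then M (nth z (c M) (index z (c M)).+1) - 1 else #|P|.
Proof. by rewrite /promote ffunE -/(c M) => ->. Qed.

Lemma Minj : injective M. Proof. by case: HM. Qed.
Lemma Mr z : 1 <= M z <= #|P|. Proof. by case: HM. Qed.

Lemma prom_ge z : z \in c M -> M z <= promote M z.
Proof.
move=> zc; rewrite prom_in //.
have ic : index z (c M) < size (c M) by rewrite index_mem.
have zn : nth z (c M) (index z (c M)) = z by rewrite nth_index.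
case: ifP => Hi; last by case/andP: (Mr z).
set s := nth z (c M) _.
have := c_succ (M:=M) z Hi; rewrite zn -/s => /lsuccS [zs Hs].
have sz : s != z by rewrite eq_sym (lt_eqF zs).
have Msz : M s != M z by apply: contra sz => /eqP/Minj ->.
case: (index z (c M)) zn Hi => [|k] zn Hi.
  have := c_head (M:=M) z (leq_ltn_trans (leq0n _) Hi); rewrite zn => Mz1; rewrite Mz1.
  have := Mr s; move: Msz => /eqP Msz; mlia.
have kl : k.+1 < size (c M) by apply: ltn_trans Hi.
have := c_succ (M:=M) z kl; rewrite zn => /lsuccS [pz Hp].
have := Hp s (lt_trans pz zs); move: Msz; mlia.
Qed.

Lemma prom_key z : (promote M z = #|P|) \/
  exists w, [/\ promote M z = M w - 1, 2 <= M w &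
     (z \notin c M /\ w = z) \/ (z \in c M /\ (index z (c M)).+1 < size (c M)
        /\ w = nth z (c M) (index z (c M)).+1)].
Proof.
case: (boolP (z \in c M)) => zc.
  rewrite prom_in //; case: ifP => Hi; last by left.
  right; exists (nth z (c M) (index z (c M)).+1); split => //; last by right.
  have := prom_ge zc; rewrite prom_in // Hi.
  have := Mr z; mlia.
right; exists z; split; [exact: prom_out| |by left].
have := Mr z; case E: (M z) => [|[|k]] //= _.
exfalso; move: zc; rewrite /c /promotion_chain /label_inv.
case: pickP => [v /eqP Hv|]; last by move/(_ z); rewrite E.
have vz : v = z by apply: Minj; rewrite Hv E.
by have [H Hs] := cf_head M #|P| v z; rewrite -vz -{1}H mem_nth.
Qed.

Lemma prom_lab : is_labeling (promote M).
Proof.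
have key2 : forall z w, (z \notin c M /\ w = z) \/ (z \in c M /\ (index z (c M)).+1 < size (c M)
        /\ w = nth z (c M) (index z (c M)).+1) -> w \in c M -> 
        z \in c M /\ (index z (c M)).+1 < size (c M) /\ w = nth z (c M) (index z (c M)).+1.
  by move=> z w [[/negbTE zc ->]|//]; rewrite zc.
split.
  move=> a b E.
  case: (prom_key a) => [Ha|[wa [Ha wa2 Pa]]]; case: (prom_key b) => [Hb|[wb [Hb wb2 Pb]]].
  - case: (boolP (a \in c M)) => ac; last by move: Ha; rewrite prom_out // => ?; have := Mr a; mlia.
    case: (boolP (b \in c M)) => bc; last by move: Hb; rewrite prom_out // => ?; have := Mr b; mlia.
    move: Ha Hb; rewrite !prom_in //.
    case: ifP => Hia; first by have := Mr (nth a (c M) (index a (c M)).+1); mlia.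
    case: ifP => Hib; first by have := Mr (nth b (c M) (index b (c M)).+1); mlia.
    move=> _ _.
    have ia : index a (c M) = (size (c M)).-1 by apply: last_idx; [rewrite index_mem|apply/negbT].
    have ib : index b (c M) = (size (c M)).-1 by apply: last_idx; [rewrite index_mem|apply/negbT].
    by rewrite -(nth_index a ac) -(nth_index a bc) ia ib.
  - by move: E; rewrite Ha Hb; have := Mr wb; mlia.
  - by move: E; rewrite Ha Hb; have := Mr wa; mlia.
  - have ew : wa = wb by apply: Minj; move: E; rewrite Ha Hb; mlia.
    case: (boolP (wa \in c M)) => wc.
      have [ac [ia ea]] := key2 _ _ Pa wc.
      have [bc [ib eb]] := key2 _ _ Pb ltac:(by rewrite -ew).
      have : nth a (c M) (index a (c M)).+1 = nth a (c M) (index b (c M)).+1.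
        by rewrite -ea ew eb (set_nth_default a).
      move/eqP; rewrite nth_uniq ?c_uniq // => /eqP [] Hi.
      by rewrite -(nth_index a ac) -(nth_index a bc) Hi.
    case: Pa => [[_ <-]|[_ [Ha2 Ea]]]; last by rewrite Ea mem_nth in wc.
    case: Pb => [[_ <-]|[_ [Hb2 Eb]]] //.
    by rewrite ew Eb mem_nth in wc.
move=> z; case: (prom_key z) => [->|[w [-> w2 _]]].
  by have := Mr z; mlia.
by have := Mr w; mlia.
Qed.
End T.
Unset Implicit Arguments. Set Strict Implicit.

Lemma iter_lab (d : Order.disp_t) (P : finPOrderType d) (L : {ffun P -> nat}) g :
  is_labeling L -> is_labeling (promote_iter g L).
Proof. move=> HL; elim: g => [|g IH] //=; exact: prom_lab. Qed.

Arguments iter_lab {d P L} g _.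

Theorem mainTheorem2 (d : Order.disp_t) (P : finPOrderType d)
    (L : {ffun P -> nat}) (x y : P) (gamma : nat) :
  is_labeling L ->
  (y < x)%O ->
  (1 <= gamma <= #|P| - 2)%N ->
  (promote_iter gamma L x < promote_iter gamma L y)%N ->
  promote_iter gamma L y = promote_iter gamma.-1 L y - 1
  /\ y \notin promotion_chain (promote_iter gamma.-1 L)
  /\ (promote_iter gamma.-1 L x < promote_iter gamma.-1 L y)%N.
Proof.
move=> HL yx /andP[g1 _]; case: gamma g1 => // g _ /=.
have HM := iter_lab g HL.
rewrite /promote_iter /= -/(promote_iter g L) -/(c (promote_iter g L)).
move: (promote_iter g L) HM => M HM HN.
have MrM := Mr HM.
have geX : M x - 1 <= promote M x.
  case: (boolP (x \in c M)) => xc; last by rewrite prom_out.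
  have := prom_ge HM xc; mlia.
have yc : y \notin c M.
  apply/negP => yc.
  have ic : index y (c M) < size (c M) by rewrite index_mem.
  have yn : nth y (c M) (index y (c M)) = y by rewrite nth_index.
  case: (boolP ((index y (c M)).+1 < size (c M))) => Hi; last first.
    have ie : index y (c M) = (size (c M)).-1 by apply: last_idx.
    have := c_last (M:=M) y (leq_ltn_trans (leq0n _) ic).
    by rewrite -ie yn => /(lsuccN (z:=x)); apply.
  have := c_succ (M:=M) y Hi; rewrite yn => /lsuccS [ys Hs].
  move: HN; rewrite (prom_in (z:=y)) // Hi.
  have sc : nth y (c M) (index y (c M)).+1 \in c M by rewrite mem_nth.
  move: sc Hs; move: (nth y (c M) (index y (c M)).+1) => s sc Hs.
  have := Hs x yx; have := MrM s; have := MrM x.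
  case: (eqVneq x s) => [->|xs].
    have := prom_ge HM sc; mlia.
  have : M x != M s by apply: contra xs => /eqP/(Minj HM) ->.
  move/eqP; move: geX; mlia.
split; [exact: prom_out|split=> //].
move: HN; rewrite (prom_out (z:=y)) //.
case: (boolP (x \in c M)) => xc; last by rewrite prom_out //; have := MrM x; have := MrM y; mlia.
have := prom_ge HM xc; have := MrM x; have := MrM y; mlia.
Qed.
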